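(* Let $\alpha\in\mathbb R$ be badly approximable, $k\in\mathbb Z\setminus\{0\}$ and $l\in\mathbb N$. Then for any $\epsilon>0$ there exists a constant $C>0$ depending only on $\alpha$ and $\epsilon$ such that for all integers $0\le M<N$, $$\left|\sum_{n=M+1}^N e^{2\pi i k\alpha n^2/l}\right|\le C(N-M)^{1/2+\epsilon}|k|^{1/2+\epsilon}l^{1/2}.$$
   Context: A real number $\alpha$ is badly approximable if the partial quotients in its continued fraction expansion are bounded. *)

(* Defs.v *)
From Stdlib Require Import Reals ZArith.
From Coquelicot Require Import Coquelicot.
Open Scope R_scope.

Fixpoint cf_rem (alpha : R) (n : nat) : R :=
  match n with
  | O => alpha
  | S m => / (cf_rem alpha m - IZR (Int_part (cf_rem alpha m)))
  end.

Definition partial_quotient (alpha : R) (n : nat) : Z :=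
  Int_part (cf_rem alpha n).

Definition irrational (alpha : R) : Prop :=
  forall (p q : Z), q <> 0%Z -> alpha <> IZR p / IZR q.

Definition badly_approximable (alpha : R) : Prop :=
  irrational alpha /\
  exists B : R, forall n : nat, IZR (partial_quotient alpha (S n)) <= B.

Definition cexpi (theta : R) : C := (cos theta, sin theta).

(* Main.v *)
Require Import Defs.
From Stdlib Require Import Reals ZArith Lra Lia.
From Coquelicot Require Import Coquelicot.
Open Scope R_scope.

Lemma irr_not_int (y : R) : irrational y -> forall a : Z, y <> IZR a.
Proof.
  intros H a E. apply (H a 1%Z); [lia|]. rewrite E. simpl. field.
Qed.

Lemma irr_sub (y : R) (a : Z) : irrational y -> irrational (y - IZR a).
Proof.
  intros H p q Hq E. apply (H (p + a * q)%Z q Hq).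
  rewrite plus_IZR, mult_IZR. apply (f_equal (fun t => t + IZR a)) in E.
  replace (y - IZR a + IZR a) with y in E by ring. rewrite E.
  field. intro Z0. apply Hq. apply eq_IZR. exact Z0.
Qed.

Lemma irr_inv (y : R) : irrational y -> irrational (/ y).
Proof.
  intros H p q Hq E.
  assert (Hy : y <> 0). { intro Y. apply (irr_not_int y H 0). rewrite Y; reflexivity. }
  assert (Hp : p <> 0%Z).
  { intro P. subst p.
    assert (/ y <> 0) by (apply Rinv_neq_0_compat; exact Hy).
    apply H0. rewrite E. simpl. unfold Rdiv. ring. }
  apply (H q p Hp). rewrite <- (Rinv_inv y). rewrite E.
  assert (IZR q <> 0) by (intro Z0; apply Hq; apply eq_IZR; exact Z0).
  assert (IZR p <> 0) by (intro Z0; apply Hp; apply eq_IZR; exact Z0).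
  field. split; assumption.
Qed.

Lemma frac_irr (y : R) : irrational y -> 0 < y - IZR (Int_part y) < 1.
Proof.
  intros H. destruct (base_Int_part y) as [H1 H2].
  split; [|lra]. destruct (Rle_lt_or_eq_dec _ _ H1) as [h|h]; [lra|].
  exfalso. apply (irr_not_int y H (Int_part y)). symmetry; exact h.
Qed.

Section CF.
Variable alpha : R.
Hypothesis Hirr : irrational alpha.
Variable B : R.
Hypothesis HB : forall n : nat, IZR (partial_quotient alpha (S n)) <= B.

Let x := cf_rem alpha.
Let a := partial_quotient alpha.

Lemma cf_irr n : irrational (x n).
Proof.
  induction n; simpl. exact Hirr.
  apply irr_inv, irr_sub. exact IHn.
Qed.

Lemma x_rec n : x (S n) * (x n - IZR (a n)) = 1.
Proof.
  unfold x, a, partial_quotient. simpl. field.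
  pose proof (frac_irr _ (cf_irr n)). unfold x in H. lra.
Qed.

Lemma frac_pos n : 0 < x n - IZR (a n) < 1.
Proof. apply frac_irr, cf_irr. Qed.

Lemma x_gt1 n : 1 < x (S n).
Proof.
  pose proof (x_rec n). pose proof (frac_pos n).
  assert (x (S n) = / (x n - IZR (a n))).
  { field_simplify_eq; [|lra]. lra. }
  rewrite H1. rewrite <- Rinv_1. apply Rinv_lt_contravar; lra.
Qed.

Lemma a_ge1 n : 1 <= IZR (a (S n)).
Proof.
  pose proof (x_gt1 n). pose proof (frac_pos (S n)).
  assert (0 < IZR (a (S n))) by lra. apply lt_IZR in H1.
  apply IZR_le. lia.
Qed.

Lemma x_le n : x (S n) < B + 1.
Proof. pose proof (frac_pos (S n)). pose proof (HB n). unfold a in *. lra. Qed.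

Lemma xx_ge2 n : 2 <= x (S n) * x (S (S n)).
Proof.
  pose proof (x_rec (S n)). pose proof (a_ge1 n). pose proof (x_gt1 (S n)).
  assert (x (S n) * x (S (S n)) = IZR (a (S n)) * x (S (S n)) + 1).
  { assert (x (S n) * x (S (S n)) - IZR (a (S n)) * x (S (S n)) = x (S (S n)) * (x (S n) - IZR (a (S n)))) by ring. lra. }
  rewrite H2. nra.
Qed.

Fixpoint P (n : nat) : R := match n with O => 1 | S m => P m * x (S m) end.

Lemma P_ge1 n : 1 <= P n.
Proof. induction n; simpl. lra. pose proof (x_gt1 n). nra. Qed.

Lemma P_mono n : P n <= P (S n).
Proof. simpl. pose proof (x_gt1 n). pose proof (P_ge1 n). nra. Qed.

Lemma P_le_mono n m : (n <= m)%nat -> P n <= P m.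
Proof.
  induction 1. lra. pose proof (P_mono m). lra.
Qed.

Lemma P_S_le n : P (S n) <= (B + 1) * P n.
Proof. simpl. pose proof (x_le n). pose proof (P_ge1 n). nra. Qed.

Lemma P_SS n : 2 * P n <= P (S (S n)).
Proof.
  simpl. pose proof (xx_ge2 n). pose proof (P_ge1 n).
  replace (P n * x (S n) * x (S (S n))) with (P n * (x (S n) * x (S (S n)))) by ring.
  nra.
Qed.

Lemma P_unb n : INR n + 1 <= P (2 * n).
Proof.
  induction n. simpl. lra.
  replace (2 * S n)%nat with (S (S (2 * n))) by lia.
  pose proof (P_SS (2 * n)). rewrite S_INR. pose proof (pos_INR n). lra.
Qed.

Lemma P_cross T : 1 <= T -> forall n, T <= P n -> exists j, T <= P j <= (B + 1) * T.
Proof.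
  intros HT n. induction n; intros H.
  - exists O. simpl in *. pose proof (x_le 0). pose proof (x_gt1 0). nra.
  - destruct (Rle_lt_dec T (P n)) as [h|h]. apply IHn; exact h.
    exists (S n). split. exact H. pose proof (P_S_le n).
    pose proof (x_le n). pose proof (x_gt1 n). nra.
Qed.

Variables u0 v0 : Z.

Fixpoint uv (n : nat) : Z * Z :=
  match n with
  | O => (u0, v0)
  | S m => let (u, v) := uv m in ((v - u * a m)%Z, u)
  end.

Definition e n := IZR (fst (uv n)) * x n - IZR (snd (uv n)).
Definition w n := IZR (fst (uv n)) * P n.

Lemma e_rec n : e (S n) = - x (S n) * e n.
Proof.
  unfold e. simpl. destruct (uv n) as [u v]. simpl.
  rewrite minus_IZR, mult_IZR.
  pose proof (x_rec n). pose proof (frac_pos n).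
  set (f := x n - IZR (a n)) in *.
  replace (x n) with (IZR (a n) + f) by (unfold f; ring).
  apply (Rmult_eq_reg_r f); [|lra].
  replace (((IZR v - IZR u * IZR (a n)) * x (S n) - IZR u) * f) with ((IZR v - IZR u * IZR (a n)) * (x (S n) * f) - IZR u * f) by ring.
  replace (- x (S n) * (IZR u * (IZR (a n) + f) - IZR v) * f) with
   (- (x (S n) * f) * (IZR u * (IZR (a n) + f) - IZR v)) by ring.
  rewrite H. ring.
Qed.

Lemma e_abs n : Rabs (e n) = Rabs (e O) * P n.
Proof.
  induction n. simpl. ring.
  rewrite e_rec. simpl. rewrite Rabs_mult, Rabs_Ropp, IHn.
  rewrite (Rabs_right (x (S n))). ring. pose proof (x_gt1 n). lra.
Qed.

Lemma w_rec n : w (S n) = w n + P n * e (S n).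
Proof.
  unfold w, e. simpl. destruct (uv n) as [u v]. simpl. ring.
Qed.

Lemma w_bound n : Rabs (w (S n) - IZR u0) <= 2 * Rabs (e O) * P n * P (S n).
Proof.
  induction n.
  - rewrite w_rec. unfold w at 1. simpl (uv 0). simpl fst. simpl P.
    replace (IZR u0 * 1 + 1 * e 1 - IZR u0) with (e 1) by ring.
    rewrite e_abs. simpl. pose proof (Rabs_pos (e 0)). pose proof (x_gt1 0). nra.
  - rewrite w_rec.
    replace (w (S n) + P (S n) * e (S (S n)) - IZR u0) with
      ((w (S n) - IZR u0) + P (S n) * e (S (S n))) by ring.
    eapply Rle_trans. apply Rabs_triang.
    rewrite Rabs_mult, e_abs, (Rabs_right (P (S n))).
    2: { pose proof (P_ge1 (S n)). lra. }
    pose proof (P_SS n). pose proof (Rabs_pos (e 0)). pose proof (P_ge1 (S n)).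
    assert (Rabs (e 0) * P (S n) * (2 * P n) <= Rabs (e 0) * P (S n) * P (S (S n))).
    { apply Rmult_le_compat_l. nra. lra. }
    nra.
Qed.

Lemma dioph_core : (1 <= u0)%Z ->
  / (16 * (B + 1) ^ 2) / IZR u0 <= Rabs (IZR u0 * alpha - IZR v0).
Proof.
  intros Hu. apply IZR_le in Hu.
  pose proof (x_gt1 0). pose proof (x_le 0).
  set (c := / (16 * (B + 1) ^ 2)).
  assert (Hc : c * (16 * (B + 1) ^ 2) = 1) by (unfold c; field; lra).
  assert (e0 : e O = IZR u0 * alpha - IZR v0) by reflexivity.
  rewrite <- e0.
  destruct (Rle_lt_dec (c / IZR u0) (Rabs (e 0))) as [h|h]; [exact h|exfalso].
  assert (Hlt : Rabs (e 0) * IZR u0 < c).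
  { apply (Rmult_lt_compat_r (IZR u0)) in h; [|lra].
    unfold Rdiv in h. rewrite Rmult_assoc, Rinv_l in h; lra. }
  set (m := Z.to_nat (2 * u0)).
  assert (Hm : INR m = 2 * IZR u0).
  { unfold m. rewrite INR_IZR_INZ, Z2Nat.id. rewrite mult_IZR. reflexivity.
    apply le_IZR. rewrite mult_IZR. simpl. lra. }
  pose proof (P_unb m) as Hpm. rewrite Hm in Hpm.
  destruct (P_cross (2 * IZR u0) ltac:(lra) (2 * m) ltac:(lra)) as [j [Hj1 Hj2]].
  destruct j as [|n]. { simpl in Hj1. lra. }
  pose proof (w_bound n) as Hw.
  pose proof (P_le_mono n (S n) ltac:(lia)) as Hn.
  pose proof (P_ge1 n). pose proof (Rabs_pos (e 0)).
  assert (Hsq : P (S n) * P (S n) <= 4 * (B + 1) ^ 2 * IZR u0 * IZR u0).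
  { assert (0 <= P (S n)) by lra. nra. }
  assert (Hw2 : Rabs (w (S n) - IZR u0) <= IZR u0 / 2).
  { eapply Rle_trans. apply Hw.
    assert (2 * Rabs (e 0) * P n * P (S n) <= 2 * Rabs (e 0) * (P (S n) * P (S n))).
    { assert (0 <= 2 * Rabs (e 0) * P (S n)) by nra. nra. }
    assert (2 * Rabs (e 0) * (P (S n) * P (S n)) <= 2 * Rabs (e 0) * (4 * (B + 1) ^ 2 * IZR u0 * IZR u0)).
    { apply Rmult_le_compat_l; lra. }
    assert (2 * Rabs (e 0) * (4 * (B + 1) ^ 2 * IZR u0 * IZR u0) = 8 * (B+1)^2 * IZR u0 * (Rabs (e 0) * IZR u0)) by ring.
    assert (8 * (B+1)^2 * IZR u0 * (Rabs (e 0) * IZR u0) <= 8 * (B+1)^2 * IZR u0 * c).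
    { apply Rmult_le_compat_l. assert (0 <= (B+1)^2) by nra. nra. lra. }
    assert (8 * (B+1)^2 * IZR u0 * c = IZR u0 / 2).
    { replace (8 * (B+1)^2 * IZR u0 * c) with (IZR u0 / 2 * (c * (16 * (B + 1) ^ 2))) by field.
      rewrite Hc. ring. }
    lra. }
  apply Rabs_le_between in Hw2. unfold w in Hw2.
  set (uj := IZR (fst (uv (S n)))) in *.
  assert (Hu1 : 0 < uj) by nra.
  assert (Hu2 : uj < 1) by nra.
  unfold uj in *. apply lt_IZR in Hu1. apply lt_IZR in Hu2. lia.
Qed.
End CF.

Lemma dioph alpha : badly_approximable alpha ->
  exists c, 0 < c <= 1/16 /\ forall p q : Z, q <> 0%Z ->
    c / Rabs (IZR q) <= Rabs (IZR q * alpha - IZR p).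
Proof.
  intros [Hirr [B HB]].
  pose proof (a_ge1 alpha Hirr 0). pose proof (HB 0%nat).
  unfold partial_quotient in H0.
  assert (HB1 : 1 <= B) by (unfold partial_quotient in *; lra).
  exists (/ (16 * (B + 1) ^ 2)). split. split.
  - apply Rinv_0_lt_compat. nra.
  - rewrite <- (Rmult_1_l (/ _)). apply Rle_trans with (1 / 16). 2: lra.
    unfold Rdiv. apply Rmult_le_compat_l. lra. apply Rinv_le_contravar. lra. nra.
  - intros p q Hq. destruct (Z_lt_le_dec 0 q).
    + rewrite Rabs_right. apply (dioph_core alpha Hirr B HB q p). lia.
      apply Rle_ge, IZR_le. lia.
    + rewrite Rabs_left. 2: { apply IZR_lt. lia. }
      rewrite <- opp_IZR.
      replace (IZR q * alpha - IZR p) with (- (IZR (- q) * alpha - IZR (- p))).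
      rewrite Rabs_Ropp. apply (dioph_core alpha Hirr B HB (- q) (- p)). lia.
      rewrite !opp_IZR. ring.
Qed.

Fixpoint rsum (f : nat -> R) (n : nat) : R :=
  match n with O => 0 | S m => rsum f m + f m end.

Lemma rsum_ext f g n : (forall i, (i < n)%nat -> f i = g i) -> rsum f n = rsum g n.
Proof.
  induction n; intros H; simpl. reflexivity.
  rewrite IHn by (intros; apply H; lia). rewrite (H n) by lia. reflexivity.
Qed.

Lemma rsum_le f g n : (forall i, (i < n)%nat -> f i <= g i) -> rsum f n <= rsum g n.
Proof.
  induction n; intros H; simpl. lra.
  pose proof (IHn ltac:(intros; apply H; lia)). pose proof (H n ltac:(lia)). lra.
Qed.

Lemma rsum_const c n : rsum (fun _ => c) n = INR n * c.
Proof. induction n; simpl rsum. simpl; ring. rewrite IHn, S_INR. ring. Qed.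

Lemma rsum_plus f g n : rsum (fun i => f i + g i) n = rsum f n + rsum g n.
Proof. induction n; simpl. ring. rewrite IHn. ring. Qed.

Lemma rsum_scal c f n : rsum (fun i => c * f i) n = c * rsum f n.
Proof. induction n; simpl. ring. rewrite IHn. ring. Qed.

Lemma rsum_nonneg f n : (forall i, (i < n)%nat -> 0 <= f i) -> 0 <= rsum f n.
Proof.
  intros H. apply Rle_trans with (rsum (fun _ => 0) n).
  rewrite rsum_const. lra. apply rsum_le. exact H.
Qed.

Lemma rsum_shift f n : rsum f (S n) = f O + rsum (fun i => f (S i)) n.
Proof. induction n. simpl. ring. simpl rsum in *. rewrite IHn. ring. Qed.

Lemma rsum_rev g L : rsum (fun d => g (L - S d)%nat) L = rsum g L.
Proof.
  induction L. reflexivity.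
  rewrite rsum_shift. change (rsum g (S L)) with (rsum g L + g L). rewrite <- IHL.
  replace (S L - 1)%nat with L by lia.
  rewrite (rsum_ext (fun i => g (S L - S (S i))%nat) (fun d => g (L - S d)%nat)).
  ring. intros; f_equal.
Qed.

Lemma rsum_remove g K m : (m < K)%nat ->
  rsum g K = rsum (fun n => if Nat.eqb n m then 0 else g n) K + g m.
Proof.
  induction K; intros H. lia.
  simpl. destruct (Nat.eqb_spec K m).
  - subst m. rewrite (rsum_ext (fun n => if Nat.eqb n K then 0 else g n) g K).
    ring. intros i Hi.
    destruct (Nat.eqb_spec i K); [lia|reflexivity].
  - rewrite IHK by lia. ring.
Qed.

Lemma rsum_inj g b H K :
  (forall n, 0 <= g n) ->
  (forall h, (h < H)%nat -> (b h < K)%nat) ->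
  (forall h h', (h < H)%nat -> (h' < H)%nat -> b h = b h' -> h = h') ->
  rsum (fun h => g (b h)) H <= rsum g K.
Proof.
  revert g. induction H; intros g Hg Hb Hi; simpl.
  - apply rsum_nonneg. intros; apply Hg.
  - set (g' := fun n => if Nat.eqb n (b H) then 0 else g n).
    rewrite (rsum_remove g K (b H)) by (apply Hb; lia).
    rewrite (rsum_ext (fun h => g (b h)) (fun h => g' (b h))).
    + pose proof (IHlist := IHnat g'). apply Rplus_le_compat_r.
      apply IHnat.
      * intros n; unfold g'; destruct (Nat.eqb n (b H)); [lra|apply Hg].
      * intros; apply Hb; lia.
      * intros; apply Hi; lia.
    + intros i Hi'. unfold g'. destruct (Nat.eqb_spec (b i) (b H)) as [Ebi|Ebi].
      * apply Hi in Ebi; lia.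
      * reflexivity.
Qed.

Section Weyl.
Variable phi : nat -> R.
Definition Xs L := rsum (fun i => cos (phi i)) L.
Definition Ys L := rsum (fun i => sin (phi i)) L.
Definition Wd L := rsum (fun d => rsum (fun i => cos (phi (i + S d)%nat - phi i)) (L - S d)) L.

Lemma W_step L : Wd (S L) = Wd L + rsum (fun i => cos (phi L - phi i)) L.
Proof.
  unfold Wd. simpl rsum at 1. replace (L - L)%nat with O by lia.
  change (rsum (fun i : nat => cos (phi (i + S L) - phi i)) 0) with 0. rewrite Rplus_0_r.
  rewrite <- (rsum_rev (fun i => cos (phi L - phi i)) L).
  rewrite <- rsum_plus. apply rsum_ext. intros d Hd.
  replace (L - d)%nat with (S (L - S d)) by lia. simpl rsum at 1.
  replace (L - S d + S d)%nat with L by lia. reflexivity.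
Qed.

Lemma weyl_id L : Xs L ^ 2 + Ys L ^ 2 = INR L + 2 * Wd L.
Proof.
  induction L. unfold Xs, Ys, Wd. simpl. ring.
  rewrite W_step. unfold Xs, Ys in *. simpl rsum.
  rewrite S_INR.
  assert (E : rsum (fun i => cos (phi L - phi i)) L =
     cos (phi L) * rsum (fun i => cos (phi i)) L + sin (phi L) * rsum (fun i => sin (phi i)) L).
  { rewrite <- !rsum_scal, <- rsum_plus. apply rsum_ext. intros. rewrite cos_minus. ring. }
  rewrite E. pose proof (sin2_cos2 (phi L)). unfold Rsqr in H.
  replace (INR L + 1 + 2 * (Wd L + (cos (phi L) * rsum (fun i => cos (phi i)) L +
      sin (phi L) * rsum (fun i => sin (phi i)) L)))
   with ((INR L + 2 * Wd L) + 1 + 2 * (cos (phi L) * rsum (fun i => cos (phi i)) L +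
      sin (phi L) * rsum (fun i => sin (phi i)) L)) by ring.
  rewrite <- IHL. rewrite <- H. ring.
Qed.
End Weyl.

Lemma geom_cos t K : 2 * sin (t / 2) * rsum (fun i => cos (INR i * t)) K =
  sin ((INR K - 1/2) * t) + sin (t / 2).
Proof.
  induction K. simpl. replace ((0 - 1/2) * t) with (- (t/2)) by field. rewrite sin_neg. ring.
  simpl rsum. rewrite S_INR.
  replace (2 * sin (t / 2) * (rsum (fun i => cos (INR i * t)) K + cos (INR K * t))) with
    (2 * sin (t / 2) * rsum (fun i => cos (INR i * t)) K + 2 * sin (t / 2) * cos (INR K * t)) by ring.
  rewrite IHK.
  replace ((INR K - 1/2) * t) with (INR K * t - t/2) by field.
  replace ((INR K + 1 - 1/2) * t) with (INR K * t + t/2) by field.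
  rewrite sin_minus, sin_plus. ring.
Qed.

Lemma geom_sin t K : 2 * sin (t / 2) * rsum (fun i => sin (INR i * t)) K =
  cos (t / 2) - cos ((INR K - 1/2) * t).
Proof.
  induction K. simpl. replace ((0 - 1/2) * t) with (- (t/2)) by field. rewrite cos_neg. ring.
  simpl rsum. rewrite S_INR.
  replace (2 * sin (t / 2) * (rsum (fun i => sin (INR i * t)) K + sin (INR K * t))) with
    (2 * sin (t / 2) * rsum (fun i => sin (INR i * t)) K + 2 * sin (t / 2) * sin (INR K * t)) by ring.
  rewrite IHK.
  replace ((INR K - 1/2) * t) with (INR K * t - t/2) by field.
  replace ((INR K + 1 - 1/2) * t) with (INR K * t + t/2) by field.
  rewrite cos_minus, cos_plus. ring.
Qed.

Lemma geom_bound t K :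
  sin (t/2) ^ 2 * (rsum (fun i => cos (INR i * t)) K ^ 2 + rsum (fun i => sin (INR i * t)) K ^ 2) <= 1.
Proof.
  pose proof (geom_cos t K). pose proof (geom_sin t K).
  set (C := rsum (fun i => cos (INR i * t)) K) in *.
  set (S := rsum (fun i => sin (INR i * t)) K) in *.
  set (A := (INR K - 1/2) * t) in *.
  assert (4 * (sin (t/2) ^ 2 * (C ^ 2 + S ^ 2)) = (2 * sin (t/2) * C) ^ 2 + (2 * sin (t/2) * S) ^ 2) by ring.
  rewrite H, H0 in H1.
  pose proof (sin2_cos2 A). pose proof (sin2_cos2 (t/2)). unfold Rsqr in *.
  pose proof (COS_bound (A + t/2)). rewrite cos_plus in H4.
  assert (E : (sin A + sin (t/2)) ^ 2 + (cos (t/2) - cos A) ^ 2 =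
     (sin A * sin A + cos A * cos A) + (sin (t/2) * sin (t/2) + cos (t/2) * cos (t/2))
     - 2 * (cos A * cos (t/2) - sin A * sin (t/2))) by ring.
  rewrite H2, H3 in E. lra.
Qed.

Lemma cos_sum_le psi t K :
  rsum (fun i => cos (psi + INR i * t)) K <=
  sqrt (rsum (fun i => cos (INR i * t)) K ^ 2 + rsum (fun i => sin (INR i * t)) K ^ 2).
Proof.
  rewrite (rsum_ext _ (fun i => cos psi * cos (INR i * t) + (- sin psi) * sin (INR i * t))).
  2: { intros. rewrite cos_plus. ring. }
  rewrite rsum_plus, !rsum_scal.
  set (C := rsum (fun i => cos (INR i * t)) K).
  set (S := rsum (fun i => sin (INR i * t)) K).
  apply Rsqr_incr_0_var. 2: apply sqrt_pos.
  rewrite Rsqr_sqrt. 2: nra.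
  pose proof (sin2_cos2 psi). unfold Rsqr in *.
  pose proof (pow2_ge_0 (cos psi * S + sin psi * C)).
  assert (E : (cos psi * C + - sin psi * S) * (cos psi * C + - sin psi * S) + (cos psi * S + sin psi * C) ^ 2
    = (sin psi * sin psi + cos psi * cos psi) * (C ^ 2 + S ^ 2)) by ring.
  rewrite H, Rmult_1_l in E. lra.
Qed.

Lemma cos_sum_le_K psi K : rsum (fun i => cos (psi i)) K <= INR K.
Proof.
  rewrite <- (Rmult_1_r (INR K)), <- rsum_const. apply rsum_le. intros. apply COS_bound.
Qed.

Lemma sin_shift_nat x n : Rabs (sin (x + INR n * PI)) = Rabs (sin x).
Proof.
  induction n. simpl. rewrite Rmult_0_l, Rplus_0_r. reflexivity.
  rewrite S_INR. replace (x + (INR n + 1) * PI) with (x + INR n * PI + PI) by ring.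
  rewrite neg_sin, Rabs_Ropp. exact IHn.
Qed.

Lemma sin_shift_int x z : Rabs (sin (x + IZR z * PI)) = Rabs (sin x).
Proof.
  destruct (Z_le_gt_dec 0 z).
  - rewrite <- (Z2Nat.id z) by lia. rewrite <- INR_IZR_INZ. apply sin_shift_nat.
  - set (n := Z.to_nat (- z)).
    assert (IZR z = - INR n). { unfold n. rewrite INR_IZR_INZ, Z2Nat.id by lia. rewrite opp_IZR. ring. }
    rewrite H. rewrite <- (sin_shift_nat (x + - INR n * PI) n).
    f_equal. f_equal. ring.
Qed.

Lemma sin_lower d : Rabs d <= 1/2 -> Rabs d <= Rabs (sin (PI * d)).
Proof.
  assert (key : forall y, 0 <= y <= 1/2 -> y <= sin (PI * y)).
  { intros y Hy. pose proof PI2_3_2. pose proof PI_4.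
    destruct (sin_bound (PI * y) 0) as [H1 _]. nra. nra.
    unfold sin_approx in H1. simpl in H1. unfold sin_term in H1. simpl in H1.
    assert (h1 : PI ^ 3 <= 24 * PI - 24).
    { assert (0 <= (PI - 3) * (4 - PI)) by nra. assert (0 <= (PI - 3) * (4 - PI) * PI) by nra. nra. }
    assert (h2 : y * y <= 1/4) by nra.
    assert (h3 : (PI * y) ^ 3 = PI ^ 3 * y * (y * y)) by ring.
    assert (h4 : PI ^ 3 * y * (y * y) <= PI ^ 3 * y * (1/4)).
    { apply Rmult_le_compat_l. assert (0 < PI ^ 3) by (apply pow_lt; lra). nra. exact h2. }
    assert (h5 : PI ^ 3 * y <= (24 * PI - 24) * y) by nra.
    replace (1 + 1 + 1 + 1 + 1 + 1) with 6 in H1 by ring.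
    replace (PI * y * (PI * y * (PI * y * 1))) with ((PI * y) ^ 3) in H1 by ring.
    lra. }
  intros H. destruct (Rle_lt_dec 0 d).
  - rewrite (Rabs_right d) by lra. pose proof (key d ltac:(split; [lra| rewrite Rabs_right in H; lra])).
    rewrite Rabs_right; lra.
  - rewrite (Rabs_left d) in * by lra. pose proof (key (-d) ltac:(lra)).
    replace (PI * d) with (- (PI * - d)) by ring. rewrite sin_neg, Rabs_Ropp, Rabs_right; lra.
Qed.

Lemma ln_le_sub1 y : 0 < y -> ln y <= y - 1.
Proof. intros. pose proof (exp_ineq1_le (ln y)). rewrite exp_ln in H0 by lra. lra. Qed.

Lemma harm1 n : rsum (fun m => / INR (S m)) (S n) <= 1 + ln (INR (S n)).
Proof.
  induction n.
  - simpl. rewrite ln_1. lra.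
  - change (rsum (fun m => / INR (S m)) (S (S n))) with
      (rsum (fun m => / INR (S m)) (S n) + / INR (S (S n))).
    assert (0 < INR (S n)) by (apply lt_0_INR; lia).
    assert (E : INR (S (S n)) = INR (S n) + 1) by (rewrite S_INR; ring).
    pose proof (ln_le_sub1 (INR (S n) / INR (S (S n)))).
    rewrite E in *.
    assert (0 < INR (S n) / (INR (S n) + 1)) by (apply Rdiv_lt_0_compat; lra).
    specialize (H0 H1). unfold Rdiv in H0. rewrite ln_mult, ln_Rinv in H0 by (try apply Rinv_0_lt_compat; lra).
    assert (INR (S n) * / (INR (S n) + 1) - 1 = - / (INR (S n) + 1)) by (field; lra).
    lra.
Qed.

Lemma harm n : rsum (fun m => / INR (S m)) n <= 1 + ln (INR n + 1).
Proof.
  destruct n. simpl. rewrite Rplus_0_l, ln_1. lra.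
  eapply Rle_trans. apply harm1.
  assert (0 < INR (S n)) by (apply lt_0_INR; lia).
  pose proof (ln_increasing (INR (S n)) (INR (S n) + 1) H ltac:(lra)). lra.
Qed.

Lemma Int_part_nonneg r : 0 <= r -> (0 <= Int_part r)%Z.
Proof.
  intros. destruct (base_Int_part r). assert (-1 < IZR (Int_part r)) by lra.
  apply lt_IZR in H2. lia.
Qed.

Lemma Int_part_mono r s : r <= s -> (Int_part r <= Int_part s)%Z.
Proof.
  intros. destruct (base_Int_part r), (base_Int_part s).
  assert (IZR (Int_part r) < IZR (Int_part s) + 1) by lra.
  rewrite <- plus_IZR in H4. apply lt_IZR in H4. lia.
Qed.

Section Bucket.
Variables (sig Lr : R) (H : nat) (del T : nat -> R).
Hypothesis Hs : 0 < sig.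
Hypothesis HL : 0 <= Lr.
Hypothesis Hd : forall h, (h < H)%nat -> Rabs (del h) <= 1/2.
Hypothesis Hsep : forall h h', (h < H)%nat -> (h' < H)%nat -> h <> h' -> sig <= Rabs (del h - del h').
Hypothesis HT1 : forall h, (h < H)%nat -> T h <= Lr.
Hypothesis HT2 : forall h, (h < H)%nat -> sig <= Rabs (del h) -> T h <= / Rabs (del h).

Let J := Z.to_nat (Int_part (/ (2 * sig))).
Let jf h := Z.to_nat (Int_part (Rabs (del h) / sig)).
Let sg h := if Rle_dec 0 (del h) then 0%nat else 1%nat.
Let b h := (2 * jf h + sg h)%nat.
Let g n := if (n <? 2)%nat then Lr else 2 / ((INR n - 1) * sig).

Lemma jf_spec h : INR (jf h) <= Rabs (del h) / sig < INR (jf h) + 1.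
Proof.
  unfold jf. assert (0 <= Rabs (del h) / sig) by (apply Rdiv_le_0_compat; [apply Rabs_pos|lra]).
  rewrite INR_IZR_INZ, Z2Nat.id by (apply Int_part_nonneg; lra).
  destruct (base_Int_part (Rabs (del h) / sig)). lra.
Qed.

Lemma g_nonneg n : 0 <= g n.
Proof.
  unfold g. destruct (Nat.ltb_spec n 2). lra.
  apply Rlt_le, Rdiv_lt_0_compat. lra. apply Rmult_lt_0_compat; [|lra].
  apply le_INR in H0. simpl in H0. lra.
Qed.

Lemma T_le_g h : (h < H)%nat -> T h <= g (b h).
Proof.
  intros Hh. pose proof (jf_spec h) as [J1 J2].
  assert (Hsg : (sg h <= 1)%nat) by (unfold sg; destruct Rle_dec; lia).
  unfold g. destruct (Nat.ltb_spec (b h) 2).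
  - apply HT1; exact Hh.
  - assert (Hj : (1 <= jf h)%nat) by (unfold b in *; lia).
    apply le_INR in Hj. simpl in Hj.
    assert (Hbj : INR (b h) - 1 <= 2 * INR (jf h)).
    { unfold b. rewrite plus_INR, mult_INR. apply le_INR in Hsg. simpl in *. lra. }
    assert (Hb1 : 1 <= INR (b h) - 1) by (apply le_INR in H0; simpl in H0; lra).
    assert (Hdj : INR (jf h) * sig <= Rabs (del h)).
    { apply (Rmult_le_compat_r sig) in J1; [|lra]. unfold Rdiv in J1.
      rewrite Rmult_assoc, Rinv_l, Rmult_1_r in J1; lra. }
    eapply Rle_trans. apply HT2. exact Hh. nra.
    apply Rle_trans with (/ (INR (jf h) * sig)).
    apply Rinv_le_contravar. nra. exact Hdj.
    replace (2 / ((INR (b h) - 1) * sig)) with (/ ((INR (b h) - 1) * sig / 2)) by (field; lra).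
    apply Rinv_le_contravar. nra.
    assert ((INR (b h) - 1) * sig <= 2 * INR (jf h) * sig) by (apply Rmult_le_compat_r; lra).
    lra.
Qed.

Lemma b_bound h : (h < H)%nat -> (b h < 2 * J + 2)%nat.
Proof.
  intros Hh. assert (Hsg : (sg h <= 1)%nat) by (unfold sg; destruct Rle_dec; lia).
  assert (jf h <= J)%nat.
  { unfold jf, J. apply Z2Nat.inj_le. apply Int_part_nonneg.
    apply Rdiv_le_0_compat; [apply Rabs_pos|lra].
    apply Int_part_nonneg. apply Rlt_le, Rinv_0_lt_compat; lra.
    apply Int_part_mono. pose proof (Hd h Hh).
    replace (/ (2 * sig)) with ((1/2) / sig) by (field; lra).
    unfold Rdiv. apply Rmult_le_compat_r. apply Rlt_le, Rinv_0_lt_compat; lra. lra. }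
  unfold b. lia.
Qed.

Lemma b_inj h h' : (h < H)%nat -> (h' < H)%nat -> b h = b h' -> h = h'.
Proof.
  intros Hh Hh' E.
  assert (Hsg : (sg h <= 1)%nat) by (unfold sg; destruct Rle_dec; lia).
  assert (Hsg' : (sg h' <= 1)%nat) by (unfold sg; destruct Rle_dec; lia).
  assert (Ej : jf h = jf h' /\ sg h = sg h') by (unfold b in E; lia).
  destruct Ej as [Ej Es].
  destruct (Nat.eq_dec h h') as [|Hne]; [assumption|exfalso].
  pose proof (Hsep h h' Hh Hh' Hne) as Hs0.
  pose proof (jf_spec h) as Jh. pose proof (jf_spec h') as Jh'. rewrite Ej in Jh.
  assert (Habs : Rabs (Rabs (del h) - Rabs (del h')) < sig).
  { apply Rabs_def1.
    - assert (Q : Rabs (del h) / sig - Rabs (del h') / sig < 1) by lra.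
      apply (Rmult_lt_compat_r sig) in Q; [|lra].
      unfold Rdiv in Q. rewrite Rmult_minus_distr_r, !Rmult_assoc, Rinv_l, !Rmult_1_r in Q by lra. lra.
    - assert (Q : -1 < Rabs (del h) / sig - Rabs (del h') / sig) by lra.
      apply (Rmult_lt_compat_r sig) in Q; [|lra].
      unfold Rdiv in Q. rewrite Rmult_minus_distr_r, !Rmult_assoc, Rinv_l, !Rmult_1_r in Q by lra. lra. }
  unfold sg in Es.
  destruct (Rle_dec 0 (del h)), (Rle_dec 0 (del h')); try discriminate.
  - rewrite (Rabs_right (del h)), (Rabs_right (del h')) in Habs by lra. lra.
  - rewrite (Rabs_left (del h)), (Rabs_left (del h')) in Habs by lra.
    replace (- del h - - del h') with (- (del h - del h')) in Habs by ring.
    rewrite Rabs_Ropp in Habs. lra.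
Qed.

Lemma bucket_sum : rsum T H <= 2 * Lr + 2 / sig * rsum (fun m => / INR (S m)) (2 * J).
Proof.
  apply Rle_trans with (rsum (fun h => g (b h)) H).
  apply rsum_le. intros; apply T_le_g; assumption.
  eapply Rle_trans. apply (rsum_inj g b H (2 * J + 2)).
  apply g_nonneg. apply b_bound. apply b_inj.
  replace (2 * J + 2)%nat with (S (S (2 * J))) by lia.
  rewrite !rsum_shift.
  assert (G0 : g 0%nat = Lr) by reflexivity. assert (G1 : g 1%nat = Lr) by reflexivity.
  rewrite G0, G1.
  rewrite <- rsum_scal. apply Req_le.
  replace (Lr + (Lr + rsum (fun i : nat => g (S (S i))) (2 * J))) with
    (2 * Lr + rsum (fun i : nat => g (S (S i))) (2 * J)) by ring.
  f_equal. apply rsum_ext. intros i _. unfold g.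
  replace (S (S i) <? 2)%nat with false by (symmetry; apply Nat.ltb_ge; lia).
  rewrite !S_INR. field. pose proof (pos_INR i). split; lra.
Qed.
End Bucket.

Lemma sum_conv (th : nat -> R) M L : (1 <= L)%nat ->
  sum_n_m (fun n => cexpi (th n)) (S M) (M + L) =
  (Xs (fun i => th (S M + i)%nat) L, Ys (fun i => th (S M + i)%nat) L).
Proof.
  intros HL. induction L. lia.
  destruct L.
  - replace (M + 1)%nat with (S M) by lia. rewrite sum_n_n. unfold cexpi, Xs, Ys. simpl.
    rewrite Nat.add_0_r. f_equal; ring.
  - replace (M + S (S L))%nat with (S (M + S L)) by lia.
    rewrite sum_n_Sm by lia. rewrite IHL by lia.
    unfold Xs, Ys. simpl rsum at 3 4. unfold cexpi.
    replace (S M + S L)%nat with (S (M + S L)) by lia.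
    reflexivity.
Qed.

Section Quad.
Variables (alpha c : R) (k : Z) (l M L : nat).
Hypothesis Hc : 0 < c <= 1/16.
Hypothesis Hdio : forall p q : Z, q <> 0%Z -> c / Rabs (IZR q) <= Rabs (IZR q * alpha - IZR p).
Hypothesis Hk : k <> 0%Z.
Hypothesis Hl : (0 < l)%nat.
Hypothesis HL : (1 <= L)%nat.

Let beta := IZR k * alpha / INR l.
Let phi i := 2 * PI * beta * INR (S M + i) ^ 2.
Let bb d := 2 * beta * INR (S d).
Let del d := bb d - IZR (Int_part (bb d + 1/2)).
Let inner d := rsum (fun i => cos (phi (i + S d)%nat - phi i)) (L - S d).

Lemma inner_eq d : inner d = rsum (fun i => cos (2 * PI * beta * (2 * INR (S M) * INR (S d) + INR (S d) ^ 2)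
     + INR i * (2 * PI * bb d))) (L - S d).
Proof.
  apply rsum_ext. intros i _. f_equal. unfold phi, bb.
  rewrite !plus_INR. ring.
Qed.

Lemma inner_le_L d : inner d <= INR L.
Proof.
  unfold inner. eapply Rle_trans. apply (cos_sum_le_K (fun i => phi (i + S d)%nat - phi i)).
  apply le_INR. lia.
Qed.

Lemma del_bound d : Rabs (del d) <= 1/2.
Proof.
  unfold del. destruct (base_Int_part (bb d + 1/2)). apply Rabs_le. lra.
Qed.

Lemma inner_le_del d : 0 < Rabs (del d) -> inner d <= / Rabs (del d).
Proof.
  intros Hpos. rewrite inner_eq. eapply Rle_trans. apply cos_sum_le.
  set (K := (L - S d)%nat).
  set (X := rsum (fun i => cos (INR i * (2 * PI * bb d))) K ^ 2 +
            rsum (fun i => sin (INR i * (2 * PI * bb d))) K ^ 2).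
  pose proof (geom_bound (2 * PI * bb d) K) as G. fold X in G.
  replace (2 * PI * bb d / 2) with (PI * del d + IZR (Int_part (bb d + 1/2)) * PI) in G
    by (unfold del; field).
  assert (Hs : Rabs (del d) <= Rabs (sin (PI * del d + IZR (Int_part (bb d + 1 / 2)) * PI))).
  { rewrite sin_shift_int. apply sin_lower. apply del_bound. }
  set (s := sin (PI * del d + IZR (Int_part (bb d + 1 / 2)) * PI)) in *.
  assert (HX : 0 <= X) by (unfold X; nra).
  assert (Rabs (del d) ^ 2 * X <= 1).
  { apply Rle_trans with (s ^ 2 * X); [|exact G].
    apply Rmult_le_compat_r. exact HX.
    rewrite <- (pow2_abs s).
    pose proof (Rabs_pos (del d)). nra. }
  apply Rsqr_incr_0_var. 2: { apply Rlt_le, Rinv_0_lt_compat. exact Hpos. }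
  rewrite Rsqr_sqrt by exact HX. unfold Rsqr.
  replace (/ Rabs (del d) * / Rabs (del d)) with (/ (Rabs (del d) ^ 2)) by (field; lra).
  apply (Rmult_le_reg_l (Rabs (del d) ^ 2)). nra.
  rewrite Rinv_r by nra. lra.
Qed.

Let sig := c / (2 * Rabs (IZR k) * INR L * INR l).

Lemma sig_pos : 0 < sig.
Proof.
  unfold sig. apply Rdiv_lt_0_compat. lra.
  assert (0 < Rabs (IZR k)) by (apply Rabs_pos_lt; apply not_0_IZR; exact Hk).
  assert (0 < INR L) by (apply lt_0_INR; lia).
  assert (0 < INR l) by (apply lt_0_INR; lia). 
  apply Rmult_lt_0_compat; [|lra]. apply Rmult_lt_0_compat; [|lra]. lra.
Qed.

Lemma del_sep d d' : (d < L)%nat -> (d' < L)%nat -> d <> d' -> sig <= Rabs (del d - del d').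
Proof.
  intros Hd Hd' Hne.
  set (z := (Z.of_nat d - Z.of_nat d')%Z).
  set (A := (Int_part (bb d + 1/2) - Int_part (bb d' + 1/2))%Z).
  assert (Hz : IZR z = INR (S d) - INR (S d')).
  { unfold z. rewrite minus_IZR, !S_INR, !INR_IZR_INZ. ring. }
  assert (Hz0 : z <> 0%Z) by (unfold z; lia).
  assert (Hzl : Rabs (IZR z) <= INR L).
  { rewrite Hz, !S_INR. apply lt_INR in Hd. apply lt_INR in Hd'.
    pose proof (pos_INR d). pose proof (pos_INR d'). apply Rabs_le. lra. }
  assert (Hlpos : 0 < INR l) by (apply lt_0_INR; lia).
  assert (Hkpos : 0 < Rabs (IZR k)) by (apply Rabs_pos_lt; apply not_0_IZR; exact Hk).
  assert (E : del d - del d' = (IZR (2 * k * z) * alpha - IZR (Z.of_nat l * A)) / INR l).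
  { unfold del, A. rewrite !mult_IZR, minus_IZR, <- INR_IZR_INZ.
    set (a1 := IZR (Int_part (bb d + 1/2))). set (a2 := IZR (Int_part (bb d' + 1/2))).
    unfold bb, beta. rewrite Hz. field. lra. }
  rewrite E. unfold Rdiv. rewrite Rabs_mult, (Rabs_inv (INR l)), (Rabs_right (INR l)) by lra.
  assert (Hq : (2 * k * z <> 0)%Z) by lia.
  pose proof (Hdio (Z.of_nat l * A) _ Hq) as D.
  apply Rle_trans with (c / Rabs (IZR (2 * k * z)) * / INR l).
  2: { apply Rmult_le_compat_r. apply Rlt_le, Rinv_0_lt_compat; lra. exact D. }
  rewrite !mult_IZR, !Rabs_mult. rewrite (Rabs_right 2) by lra.
  assert (Hzp : 0 < Rabs (IZR z)) by (apply Rabs_pos_lt; apply not_0_IZR; exact Hz0).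
  unfold Rdiv at 1.
  replace (c * / (2 * Rabs (IZR k) * Rabs (IZR z)) * / INR l) with
    (c / (2 * Rabs (IZR k) * Rabs (IZR z) * INR l)) by (field; lra).
  unfold sig, Rdiv. apply Rmult_le_compat_l. lra.
  apply Rinv_le_contravar.
  - apply Rmult_lt_0_compat; [|lra]. apply Rmult_lt_0_compat; [|lra]. lra.
  - apply Rmult_le_compat_r. lra.
    apply Rmult_le_compat_l. lra. exact Hzl.
Qed.

Lemma Wd_inner : Wd phi L = rsum inner L.
Proof. reflexivity. Qed.

Lemma Q_bound1 : Xs phi L ^ 2 + Ys phi L ^ 2 <= 3 * INR L ^ 2.
Proof.
  rewrite weyl_id, Wd_inner.
  assert (rsum inner L <= INR L * INR L).
  { rewrite <- rsum_const. apply rsum_le. intros; apply inner_le_L. }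
  assert (1 <= INR L) by (apply (le_INR 1); lia). nra.
Qed.

Lemma Q_bound2 : Xs phi L ^ 2 + Ys phi L ^ 2 <= 5 * INR L + 4 / sig * (1 + ln (/ sig + 1)).
Proof.
  rewrite weyl_id, Wd_inner.
  pose proof sig_pos as Hs.
  pose proof (bucket_sum sig (INR L) L del inner Hs (pos_INR L)
     (fun h _ => del_bound h) del_sep (fun h _ => inner_le_L h)
     (fun h _ H => inner_le_del h ltac:(lra))) as Bk.
  set (J := Z.to_nat (Int_part (/ (2 * sig)))) in Bk.
  pose proof (harm (2 * J)) as Hh.
  assert (HJ : INR (2 * J) <= / sig).
  { unfold J. rewrite mult_INR, (INR_IZR_INZ (Z.to_nat _)), Z2Nat.id.
    destruct (base_Int_part (/ (2 * sig))). simpl.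
    replace (/ sig) with (2 * / (2 * sig)) by (field; lra). lra.
    apply Int_part_nonneg. apply Rlt_le, Rinv_0_lt_compat; lra. }
  assert (Hln : ln (INR (2 * J) + 1) <= ln (/ sig + 1)).
  { destruct (Rle_lt_or_eq_dec _ _ HJ) as [h|h].
    apply Rlt_le, ln_increasing. pose proof (pos_INR (2 * J)). lra. lra.
    rewrite h. lra. }
  assert (0 <= 2 / sig) by (apply Rlt_le, Rdiv_lt_0_compat; lra).
  assert (2 / sig * rsum (fun m : nat => / INR (S m)) (2 * J) <= 2 / sig * (1 + ln (/ sig + 1))).
  { apply Rmult_le_compat_l. lra. lra. }
  replace (4 / sig) with (2 * (2 / sig)) by (field; lra). lra.
Qed.
End Quad.

Lemma final_arith (c eps Lr kk lr Q : R) :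
  0 < c -> 0 < eps -> 1 <= Lr -> 1 <= kk -> 1 <= lr -> 0 <= Q ->
  Q <= 3 * Lr ^ 2 ->
  (kk * lr < Lr -> Q <= 5 * Lr + 4 / (c / (2 * kk * Lr * lr)) * (1 + ln (/ (c / (2 * kk * Lr * lr)) + 1))) ->
  sqrt Q <= sqrt (5 + 8 / c * (1 + ln (2 / c + 1) + / eps)) *
     Rpower Lr (1/2 + eps) * Rpower kk (1/2 + eps) * sqrt lr.
Proof.
  intros Hc He HL Hk Hl HQ Q1 Q2.
  set (D := 2 / c + 1).
  assert (HD : 1 <= D) by (unfold D; assert (0 < 2 / c) by (apply Rdiv_lt_0_compat; lra); lra).
  assert (HlnD : 0 <= ln D).
  { destruct (Rle_lt_or_eq_dec _ _ HD) as [h|h]. rewrite <- ln_1. apply Rlt_le, ln_increasing; lra.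
    rewrite <- h, ln_1. lra. }
  set (K0 := 5 + 8 / c * (1 + ln D + / eps)).
  assert (H8c : 0 < 8 / c) by (apply Rdiv_lt_0_compat; lra).
  assert (Hie : 0 < / eps) by (apply Rinv_0_lt_compat; lra).
  assert (HK0 : 5 <= K0) by (unfold K0; assert (0 <= 8 / c * (1 + ln D + / eps)) by (apply Rmult_le_pos; lra); lra).
  set (Rr := Rpower Lr (2 * eps)).
  assert (HR : 1 <= Rr).
  { unfold Rr. rewrite <- (Rpower_O Lr) by lra. apply Rle_Rpower; lra. }
  assert (Hmain : Q <= K0 * (Lr * Rr) * kk * lr).
  { assert (Hkl : 1 <= kk * lr) by nra.
    assert (HLR : Lr <= Lr * Rr) by nra.
    destruct (Rlt_le_dec (kk * lr) Lr) as [h|h].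
    - specialize (Q2 h). eapply Rle_trans. exact Q2.
      set (s := c / (2 * kk * Lr * lr)) in *.
      assert (Hs : / s = 2 * kk * Lr * lr / c) by (unfold s; field; repeat split; lra).
      assert (H4s : 4 / s = 8 / c * (kk * Lr * lr)) by (unfold Rdiv at 1; rewrite Hs; field; lra).
      assert (Hb : / s + 1 <= D * (Lr * Lr)).
      { rewrite Hs. unfold D.
        assert (2 * kk * Lr * lr / c <= 2 / c * (Lr * Lr)).
        { replace (2 * kk * Lr * lr / c) with (2 / c * (kk * lr * Lr)) by (field; lra).
          apply Rmult_le_compat_l. lra. nra. }
        nra. }
      assert (Hpos : 0 < / s + 1).
      { rewrite Hs. assert (0 < 2 * kk * Lr * lr / c) by (apply Rdiv_lt_0_compat; [nra|lra]). lra. }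
      assert (Hln1 : ln (/ s + 1) <= ln D + 2 * ln Lr).
      { destruct (Rle_lt_or_eq_dec _ _ Hb) as [h'|h'].
        - apply Rlt_le in h'. apply Rle_trans with (ln (D * (Lr * Lr))).
          destruct (Rle_lt_or_eq_dec _ _ h') as [h2|h2].
          apply Rlt_le, ln_increasing; lra. rewrite h2; lra.
          rewrite !ln_mult by nra. lra.
        - rewrite h'. rewrite !ln_mult by nra. lra. }
      assert (Hln2 : 2 * ln Lr <= Rr / eps).
      { pose proof (ln_le_sub1 Rr ltac:(lra)). unfold Rr in H at 1. rewrite ln_Rpower in H.
        apply (Rmult_le_reg_l eps). lra. replace (eps * (Rr / eps)) with Rr by (field; lra). lra. }
      assert (Hb2 : 1 + ln (/ s + 1) <= (1 + ln D + / eps) * Rr).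
      { replace (Rr / eps) with (/ eps * Rr) in Hln2 by (field; lra). nra. }
      rewrite H4s.
      assert (0 <= 8 / c * (kk * Lr * lr)) by (apply Rmult_le_pos; nra).
      assert (8 / c * (kk * Lr * lr) * (1 + ln (/ s + 1)) <= 8 / c * (kk * Lr * lr) * ((1 + ln D + / eps) * Rr)).
      { apply Rmult_le_compat_l; assumption. }
      assert (5 * Lr <= 5 * (Lr * Rr) * kk * lr).
      { assert (Lr <= Lr * Rr * (kk * lr)) by nra. nra. }
      unfold K0.
      replace ((5 + 8 / c * (1 + ln D + / eps)) * (Lr * Rr) * kk * lr) with
        (5 * (Lr * Rr) * kk * lr + 8 / c * (kk * Lr * lr) * ((1 + ln D + / eps) * Rr)) by ring.
      lra.
    - eapply Rle_trans. exact Q1.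
      assert (3 * Lr ^ 2 <= 3 * Lr * (kk * lr)) by nra.
      assert (3 * Lr * (kk * lr) <= K0 * (Lr * Rr) * kk * lr).
      { replace (K0 * (Lr * Rr) * kk * lr) with (K0 * (Lr * Rr) * (kk * lr)) by ring.
        apply Rmult_le_compat_r. nra. nra. }
      lra. }
  set (a := 1/2 + eps).
  set (PL := Rpower Lr a). set (Pk := Rpower kk a).
  assert (E1 : Lr * Rr = PL * PL).
  { unfold PL, Rr. rewrite <- Rpower_plus. rewrite <- (Rpower_1 Lr) at 1 by lra.
    rewrite <- Rpower_plus. f_equal. unfold a. lra. }
  assert (E2 : kk <= Pk * Pk).
  { unfold Pk. rewrite <- Rpower_plus. rewrite <- (Rpower_1 kk) at 1 by lra.
    apply Rle_Rpower. lra. unfold a. lra. }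
  assert (E3 : lr = sqrt lr * sqrt lr) by (rewrite sqrt_sqrt; lra).
  assert (HPL : 0 < PL) by (unfold PL, Rpower; apply exp_pos).
  assert (HPk : 0 < Pk) by (unfold Pk, Rpower; apply exp_pos).
  assert (Hsl : 0 < sqrt lr) by (apply sqrt_lt_R0; lra).
  assert (HsK : 0 < sqrt K0) by (apply sqrt_lt_R0; lra).
  assert (Hfin : Q <= (sqrt K0 * PL * Pk * sqrt lr) ^ 2).
  { replace ((sqrt K0 * PL * Pk * sqrt lr) ^ 2) with
      ((sqrt K0 * sqrt K0) * (PL * PL) * (Pk * Pk) * (sqrt lr * sqrt lr)) by ring.
    rewrite <- E3, <- E1, sqrt_sqrt by lra.
    eapply Rle_trans. exact Hmain.
    replace (K0 * (Lr * Rr) * kk * lr) with ((K0 * (Lr * Rr) * lr) * kk) by ring.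
    replace (K0 * (Lr * Rr) * (Pk * Pk) * lr) with ((K0 * (Lr * Rr) * lr) * (Pk * Pk)) by ring.
    apply Rmult_le_compat_l. assert (0 < Lr * Rr) by nra. assert (0 < K0 * (Lr * Rr)) by nra. nra.
    exact E2. }
  fold D. fold K0.
  rewrite <- (sqrt_pow2 (sqrt K0 * PL * Pk * sqrt lr)).
  apply sqrt_le_1_alt. exact Hfin.
  apply Rlt_le. repeat apply Rmult_lt_0_compat; assumption.
Qed.

Theorem lemma5p1 :
  forall alpha : R, badly_approximable alpha ->
  forall eps : R, 0 < eps ->
  exists Cst : R, 0 < Cst /\
    forall (k : Z) (l M N : nat),
      k <> 0%Z -> (0 < l)%nat -> (M < N)%nat ->
      Cmod (sum_n_m
              (fun n : nat =>
                 cexpi (2 * PI * IZR k * alpha * INR n ^ 2 / INR l))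
              (S M) N)
      <= Cst * Rpower (INR (N - M)) (1/2 + eps)
             * Rpower (Rabs (IZR k)) (1/2 + eps) * sqrt (INR l).
Proof.
  intros alpha Hba eps Heps.
  destruct (dioph alpha Hba) as [c [Hc Hdio]].
  exists (sqrt (5 + 8 / c * (1 + ln (2 / c + 1) + / eps))). split.
  { apply sqrt_lt_R0.
    assert (0 < 8 / c) by (apply Rdiv_lt_0_compat; lra).
    assert (0 <= ln (2 / c + 1)).
    { rewrite <- ln_1. assert (0 < 2 / c) by (apply Rdiv_lt_0_compat; lra).
      apply Rlt_le, ln_increasing; lra. }
    assert (0 < / eps) by (apply Rinv_0_lt_compat; lra).
    assert (0 <= 8 / c * (1 + ln (2 / c + 1) + / eps)) by (apply Rmult_le_pos; lra). lra. }
  intros k l M N Hk Hl HMN.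
  set (L := (N - M)%nat).
  assert (HL : (1 <= L)%nat) by (unfold L; lia).
  replace N with (M + L)%nat by (unfold L; lia).
  rewrite sum_conv by exact HL.
  assert (HlR : 0 < INR l) by (apply lt_0_INR; lia).
  assert (EX : Xs (fun i => (fun n : nat => 2 * PI * IZR k * alpha * INR n ^ 2 / INR l) (S M + i)%nat) L = Xs (fun i : nat => 2 * PI * (IZR k * alpha / INR l) * INR (S M + i) ^ 2) L).
  { unfold Xs. apply rsum_ext. intros. f_equal. field. lra. }
  assert (EY : Ys (fun i => (fun n : nat => 2 * PI * IZR k * alpha * INR n ^ 2 / INR l) (S M + i)%nat) L = Ys (fun i : nat => 2 * PI * (IZR k * alpha / INR l) * INR (S M + i) ^ 2) L).
  { unfold Ys. apply rsum_ext. intros. f_equal. field. lra. }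
  unfold Cmod. simpl fst. simpl snd.
  apply final_arith.
  - lra.
  - exact Heps.
  - apply (le_INR 1). exact HL.
  - assert (1 <= Rabs (IZR k)).
    { destruct (Z_lt_le_dec 0 k).
      rewrite Rabs_right. apply IZR_le. lia. apply Rle_ge, IZR_le. lia.
      rewrite Rabs_left. rewrite <- opp_IZR. apply IZR_le. lia. apply IZR_lt. lia. }
    exact H.
  - apply (le_INR 1). lia.
  - apply Rplus_le_le_0_compat; apply pow2_ge_0.
  - pose proof (Q_bound1 alpha k l M L Hl HL) as Q. rewrite <- EX, <- EY in Q. exact Q.
  - intros _. pose proof (Q_bound2 alpha c k l M L Hc Hdio Hk Hl HL) as Q.
    rewrite <- EX, <- EY in Q. exact Q.
Qed.
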